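(* For every $n\ge3$ with $n\neq6$, $\operatorname{sdim}C_n=2$, while $\operatorname{sdim}C_6=3$.
   Context: $C_n$ is the cycle graph on $n$ vertices. A unit-distance embedding of a graph $G$ in $\mathbb{R}^n$ is an injective map $f$ from the vertex set of $G$ to $\mathbb{R}^n$ such that $|f(u)-f(v)|=1$ for every edge $uv$ and no point $f(w)$ lies on the segment $[f(u),f(v)]$ for an edge $uv$ with $w\notin\{u,v\}$ (edges may cross one another). $G$ admits a spherical embedding of dimension $k$ and radius $r$ if $G$ has a unit-distance embedding in $\mathbb{R}^k$ all of whose vertices lie on a sphere $\{x\in\mathbb{R}^k:|x-c|=r\}$. The spherical dimension $\operatorname{sdim}G$ is the least $k$ such that $G$ admits a spherical embedding of dimension $k$ and some radius $r<1$. *)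

(* Defs.v *)
From HB Require Import structures.
From mathcomp Require Import all_boot all_order all_algebra.
From mathcomp Require Import Rstruct.
Set Implicit Arguments. Unset Strict Implicit. Unset Printing Implicit Defensive.
Import Order.TTheory GRing.Theory Num.Theory.
Local Open Scope ring_scope.

Notation RR := Rdefinitions.R.

Definition edist (k : nat) (x y : 'rV[RR]_k) : RR :=
  Num.sqrt (\sum_(i < k) (x ord0 i - y ord0 i) ^+ 2).

Definition on_segment (k : nat) (p a b : 'rV[RR]_k) : Prop :=
  exists t : RR, 0 <= t /\ t <= 1 /\ p = (1 - t) *: a + t *: b.

Definition unit_distance_embedding (V : finType) (adj : rel V) (k : nat)
    (f : V -> 'rV[RR]_k) : Prop :=
  injective f /\
  (forall u v, adj u v -> edist (f u) (f v) = 1) /\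
  (forall u v w, adj u v -> w != u -> w != v -> ~ on_segment (f w) (f u) (f v)).

Definition spherical_embedding (V : finType) (adj : rel V) (k : nat) (r : RR) :
    Prop :=
  exists (f : V -> 'rV[RR]_k) (c : 'rV[RR]_k),
    unit_distance_embedding adj f /\ forall v, edist (f v) c = r.

Definition sph_admits (V : finType) (adj : rel V) (k : nat) : Prop :=
  exists r : RR, r < 1 /\ spherical_embedding adj k r.

Definition sdim_is (V : finType) (adj : rel V) (k : nat) : Prop :=
  sph_admits adj k /\ forall j : nat, (j < k)%N -> ~ sph_admits adj j.

Definition cycle_adj (n : nat) : rel 'I_n :=
  fun i j => (val j == (val i).+1 %% n)%N || (val i == (val j).+1 %% n)%N.
Arguments cycle_adj n : clear implicits.

(* Main.v *)
From Stdlib Require Import Reals.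
Require Import Defs.
From HB Require Import structures.
From mathcomp Require Import all_boot all_order all_algebra.
From mathcomp Require Import Rstruct.
From mathcomp Require Import complex.
From mathcomp Require Import ring lra zify.
Set Implicit Arguments. Unset Strict Implicit. Unset Printing Implicit Defensive.
Import Order.TTheory GRing.Theory Num.Theory.
Local Open Scope ring_scope.

Lemma edist_sq k (x y : 'rV[RR]_k) :
  edist x y ^+ 2 = \sum_(i < k) (x ord0 i - y ord0 i) ^+ 2.
Proof. by rewrite /edist sqr_sqrtr // sumr_ge0 // => i _; exact: sqr_ge0. Qed.

Lemma edist_ge0 k (x y : 'rV[RR]_k) : 0 <= edist x y.
Proof. exact: sqrtr_ge0. Qed.

Lemma sphere_segment k (a b p c : 'rV[RR]_k) r :
  edist a c = r -> edist b c = r -> edist p c = r -> on_segment p a b ->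
  p = a \/ p = b.
Proof.
move=> ha hb hp [t [t0 [t1 ep]]].
have key : \sum_(i < k) (t * (1 - t)) * (a ord0 i - b ord0 i) ^+ 2 = 0.
  have e : forall i, (t * (1 - t)) * (a ord0 i - b ord0 i) ^+ 2 =
     ((1 - t) * (a ord0 i - c ord0 i) ^+ 2 + t * (b ord0 i - c ord0 i) ^+ 2)
      - (p ord0 i - c ord0 i) ^+ 2.
    by move=> i; rewrite ep !mxE; ring.
  rewrite (eq_bigr _ (fun i _ => e i)) sumrB big_split /= -!mulr_sumr.
  by rewrite -!edist_sq ha hb hp; ring.
rewrite -mulr_sumr in key; move/eqP: key; rewrite mulf_eq0 => /orP [h|h].
  move: h; rewrite mulf_eq0 => /orP [/eqP h|h].
    by left; rewrite ep h; apply/rowP => i; rewrite !mxE; ring.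
  move: h; rewrite subr_eq0 => /eqP h.
  by right; rewrite ep -h; apply/rowP => i; rewrite !mxE; ring.
have := psumr_eq0P (fun i _ => sqr_ge0 (a ord0 i - b ord0 i)) (eqP h).
move=> hab; left; rewrite ep; apply/rowP => i; rewrite !mxE.
have /eqP := hab i isT; rewrite sqrf_eq0 subr_eq0 => /eqP ->; ring.
Qed.

Lemma sph_emb (V : finType) (adj : rel V) k (f : V -> 'rV[RR]_k) c r :
  injective f -> (forall u v, adj u v -> edist (f u) (f v) = 1) ->
  (forall v, edist (f v) c = r) -> spherical_embedding adj k r.
Proof.
move=> inj he hs; exists f, c; split => //; split => //; split => // u v w _ hwu hwv hseg.
case: (sphere_segment (hs u) (hs v) (hs w) hseg) => /inj /eqP.
  by rewrite (negbTE hwu).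
by rewrite (negbTE hwv).
Qed.

Lemma no_dim01 (n : nat) (adj : rel 'I_n) (j : nat) : (3 <= n)%N -> (j < 2)%N -> ~ sph_admits adj j.
Proof.
move=> hn hj [r [_ [f [c [[inj _] hs]]]]].
have h0 : (0 < n)%N by apply: leq_trans hn.
have h1 : (1 < n)%N by apply: leq_trans hn.
have h2 : (2 < n)%N by [].
pose v0 := Ordinal h0; pose v1 := Ordinal h1; pose v2 := Ordinal h2.
case: j hj f c inj hs => [|[|//]] _ f c inj hs.
  have : f v0 = f v1 by apply/rowP; case.
  by move/inj.
pose d v := f v ord0 ord0 - c ord0 ord0.
have hd : forall v, d v ^+ 2 = r ^+ 2.
  by move=> v; rewrite -(hs v) edist_sq big_ord1.
have hne : forall u v, u != v -> d u != d v.
  move=> u v huv; apply/negP => /eqP e; move/negP: huv; apply; apply/eqP/inj.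
  by apply/rowP => i; rewrite (ord1 i); move: e; rewrite /d => /eqP; rewrite (inj_eq (addIr _)) => /eqP.
have sq : forall u v, u != v -> d u = - d v.
  move=> u v huv; have := hne u v huv; have : (d u - d v) * (d u + d v) = 0.
    by rewrite -subr_sqr !hd subrr.
  move/eqP; rewrite mulf_eq0 subr_eq0 => /orP [->//|]; rewrite addr_eq0 => /eqP ->//.
have := sq v0 v1 isT; have := sq v0 v2 isT; have := hne v1 v2 isT.
by move=> h a b; move: h; rewrite -(opprK (d v1)) -b a opprK eqxx.
Qed.

Lemma poly6 (R : comRingType) (w : R) :
  (w ^+ 3 - 1) * (w + 1) * (w ^+ 2 - w + 1) = w ^+ 6 - 1.
Proof. ring. Qed.

Lemma hex_core (x y : nat -> RR) (s : RR) :
  s < 1 ->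
  (forall i, (i < 7)%N -> x i ^+ 2 + y i ^+ 2 = s) ->
  (forall i, (i < 6)%N -> (x i - x i.+1) ^+ 2 + (y i - y i.+1) ^+ 2 = 1) ->
  x 6%N = x 0%N -> y 6%N = y 0%N ->
  (forall i j, (i < j)%N -> (j < 6)%N -> x i = x j -> y i = y j -> False) -> False.
Proof.
move=> s1 hn hd x6 y6 hdist.
have s0 : 0 < s.
  have := hn 0%N isT; have := hn 1%N isT; have := hd 0%N isT.
  have := sqr_ge0 (x 0%N + x 1%N); have := sqr_ge0 (y 0%N + y 1%N); nra.
have sne : s != 0 by rewrite gt_eqF.
pose a := s - 1/2.
pose b i := x i * y i.+1 - y i * x i.+1.
have hdot : forall i, (i < 6)%N -> x i * x i.+1 + y i * y i.+1 = a.
  move=> i hi; have := hn i (leq_trans hi (leqnSn 6)).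
  have := hn i.+1 hi; have := hd i hi; rewrite /a; nra.
have recx : forall i, (i < 6)%N -> s * x i.+1 = a * x i - b i * y i.
  move=> i hi; rewrite -(hdot i hi) /b -(hn i (leq_trans hi (leqnSn 6))); ring.
have recy : forall i, (i < 6)%N -> s * y i.+1 = a * y i + b i * x i.
  move=> i hi; rewrite -(hdot i hi) /b -(hn i (leq_trans hi (leqnSn 6))); ring.
have hb2 : forall i, (i < 6)%N -> b i ^+ 2 = s ^+ 2 - a ^+ 2.
  move=> i hi; rewrite -(hdot i hi) /b.
  have -> : s ^+ 2 = (x i ^+ 2 + y i ^+ 2) * (x i.+1 ^+ 2 + y i.+1 ^+ 2).
    by rewrite hn ?(leq_trans hi (leqnSn 6)) // hn // expr2.
  ring.
have bstep : forall i, (i < 5)%N -> b i.+1 = b i.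
  move=> i hi.
  have hi6 : (i < 6)%N by apply: ltn_trans hi _.
  have hi16 : (i.+1 < 6)%N by [].
  have : (b i.+1 - b i) * (b i.+1 + b i) = 0.
    by rewrite -subr_sqr hb2 // hb2 // subrr.
  move/eqP; rewrite mulf_eq0 subr_eq0 => /orP [/eqP //|]; rewrite addr_eq0 => /eqP hbn.
  have ss : s * s = a ^+ 2 + b i ^+ 2 by rewrite hb2 // expr2; ring.
  have ex : x i.+2 = x i.
    apply: (mulfI (mulf_neq0 sne sne)).
    have E := recx i.+1 hi16; rewrite hbn in E.
    transitivity (s * (a * x i.+1 + b i * y i.+1)); first by rewrite -mulrA E; ring.
    rewrite mulrDr mulrCA recx // mulrCA recy // ss; ring.
  have ey : y i.+2 = y i.
    apply: (mulfI (mulf_neq0 sne sne)).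
    have E := recy i.+1 hi16; rewrite hbn in E.
    transitivity (s * (a * y i.+1 - b i * x i.+1)); first by rewrite -mulrA E; ring.
    rewrite mulrBr mulrCA recy // mulrCA recx // ss; ring.
  case: (ltnP i 4) => hi4.
    have h2 : (i.+2 < 6)%N by []. 
    exfalso; exact: (hdist i i.+2 (leqnSn i.+1) h2 (esym ex) (esym ey)).
  have e4 : i = 4%N by apply/eqP; rewrite eqn_leq hi4 andbT -ltnS.
  move: ex ey; rewrite e4 x6 y6 => ex ey.
  exfalso; exact: (hdist 0%N 4%N isT isT ex ey).
have ball : forall i, (i < 6)%N -> b i = b 0%N.
  elim=> [//|i IH] hi; rewrite bstep //; apply: IH; exact: ltnW.
pose w : RR[i] := ((a / s) +i* (b 0%N / s))%C.
pose z i : RR[i] := (x i +i* y i)%C.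
have zstep : forall i, (i < 6)%N -> z i.+1 = z i * w.
  move=> i hi; rewrite /z /w; apply/eqP; rewrite eq_complex /=; apply/andP; split; apply/eqP.
    apply: (mulfI sne); rewrite recx // ball //; field; exact: sne.
  apply: (mulfI sne); rewrite recy // ball //; field; exact: sne.
have zpow : forall k, (k <= 6)%N -> z k = z 0%N * w ^+ k.
  elim=> [|k IH] hk; first by rewrite expr0 mulr1.
  rewrite zstep // IH; [by rewrite exprSr mulrA | exact: ltnW].
have z6 : z 6%N = z 0%N by rewrite /z x6 y6.
have z0ne : z 0%N != 0.
  apply/negP; rewrite /z eq_complex /= => /andP [/eqP hx /eqP hy].
  have := hn 0%N isT; rewrite hx hy => h; move: s0; rewrite -h; lra.
have w6 : w ^+ 6 = 1 by apply: (mulfI z0ne); rewrite -zpow // z6 mulr1.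
have w2 : w ^+ 2 != 1.
  apply/negP=> /eqP h; have : z 2%N = z 0%N by rewrite zpow // h mulr1.
  rewrite /z => /eqP; rewrite eq_complex /= => /andP[/eqP hx /eqP hy].
  exact: (hdist 0%N 2%N isT isT (esym hx) (esym hy)).
have w3 : w ^+ 3 != 1.
  apply/negP=> /eqP h; have : z 3%N = z 0%N by rewrite zpow // h mulr1.
  rewrite /z => /eqP; rewrite eq_complex /= => /andP[/eqP hx /eqP hy].
  exact: (hdist 0%N 3%N isT isT (esym hx) (esym hy)).
have : (w ^+ 3 - 1) * (w + 1) * (w ^+ 2 - w + 1) = 0.
  by rewrite poly6 w6 subrr.
move/eqP; rewrite !mulf_eq0 subr_eq0 (negbTE w3) /= addr_eq0 => /orP [/eqP hw1|h].
  by move: w2; rewrite hw1 sqrrN expr1n eqxx.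
move: h; rewrite expr2 /w eq_complex /= => /andP [/eqP h1 /eqP h2].
have ps : a / s * s = a by field; exact: sne.
move: h1 h2 ps; set p := a / s; set q := b 0%N / s => h1 h2 ps.
have p12 : p < 1/2 by rewrite /a in ps; nra.
have q0 : q = 0.
  have : q * (2 * p - 1) = 0 by rewrite -h2; ring.
  move/eqP; rewrite mulf_eq0 => /orP [/eqP //|]; move=> h; exfalso; move: h p12.
  move/eqP; lra.
move: h1; rewrite q0; have := sqr_ge0 (p - 1/2); nra.
Qed.

Lemma edist2 (u v : 'rV[RR]_2) : edist u v ^+ 2 =
  (u ord0 ord0 - v ord0 ord0) ^+ 2 +
  (u ord0 (lift ord0 ord0) - v ord0 (lift ord0 ord0)) ^+ 2.
Proof. by rewrite edist_sq !big_ord_recl big_ord0 addr0. Qed.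

Lemma rV2_eq (u v : 'rV[RR]_2) : u ord0 ord0 = v ord0 ord0 ->
  u ord0 (lift ord0 ord0) = v ord0 (lift ord0 ord0) -> u = v.
Proof.
move=> h0 h1; apply/rowP => k; case: k => [[|[|//]] hk].
  by have -> : Ordinal hk = ord0 by apply: val_inj.
by have -> : Ordinal hk = lift ord0 ord0 by apply: val_inj.
Qed.

Lemma no_hex2 : ~ sph_admits (cycle_adj 6) 2.
Proof.
move=> [r [r1 [f [c [[inj [hed _]] hs]]]]].
pose g i := f (inord (i %% 6) : 'I_6).
pose x i := g i ord0 ord0 - c ord0 ord0.
pose y i := g i ord0 (lift ord0 ord0) - c ord0 (lift ord0 ord0).
have r0 : 0 <= r by rewrite -(hs ord0) edist_ge0.
apply: (@hex_core x y (r ^+ 2)).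
- by rewrite expr2; nra.
- by move=> i _; rewrite /x /y -(hs (inord (i %% 6))) edist2.
- move=> i hi.
  have hadj : cycle_adj 6 (inord (i %% 6)) (inord (i.+1 %% 6)).
    by case: i hi => [|[|[|[|[|[|//]]]]]] _; rewrite /cycle_adj /= !inordK.
  rewrite -(expr1n _ 2) -(hed _ _ hadj) edist2 /x /y /g; ring.
- by [].
- by [].
- move=> i j hij hj ex ey; have hi : (i < 6)%N by apply: ltn_trans hj.
  have : g i = g j.
    apply: rV2_eq; [apply: (addIr (- c ord0 ord0)); exact: ex | apply: (addIr (- c ord0 (lift ord0 ord0))); exact: ey].
  move/inj/(congr1 (@nat_of_ord 6)); rewrite !inordK ?modn_small ?ltn_pmod // => e.
  by move: hij; rewrite e ltnn.
Qed.

Definition cubeco (i : 'I_6) (k : 'I_3) : nat :=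
  nth 0%N (nth [::] [:: [:: 0; 0; 0]; [:: 1; 0; 0]; [:: 1; 1; 0];
                       [:: 1; 1; 1]; [:: 0; 1; 1]; [:: 0; 0; 1]]%N i) k.
Definition cubef (i : 'I_6) : 'rV[RR]_3 := \row_(k < 3) (cubeco i k)%:R.
Definition cubec : 'rV[RR]_3 := \row_(k < 3) (1 / 2).

Lemma cubeco_le1 i k : (cubeco i k <= 1)%N.
Proof. by case: i => [[|[|[|[|[|[|//]]]]]] hi]; case: k => [[|[|[|//]]] hk]. Qed.

Lemma sq01 (a b : nat) : (a <= 1)%N -> (b <= 1)%N ->
  ((a%:R : RR) - b%:R) ^+ 2 = (a != b)%:R.
Proof. by case: a => [|[|//]]; case: b => [|[|//]] _ _ /=; ring. Qed.

Lemma sqhalf (a : nat) : (a <= 1)%N -> ((a%:R : RR) - 1 / 2) ^+ 2 = 1 / 4.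
Proof. by case: a => [|[|//]] _; field. Qed.

Lemma cube_emb : sph_admits (cycle_adj 6) 3.
Proof.
exists (Num.sqrt (3 / 4)); split.
  have := @ltr_sqrt RR (3 / 4) 1 ltr01; rewrite sqrtr1 => ->; lra.
apply: (@sph_emb _ _ _ cubef cubec).
- move=> i j e.
  have hk : forall k, cubeco i k = cubeco j k.
    move=> k; have := congr1 (fun v : 'rV[RR]_3 => v ord0 k) e.
    by rewrite /cubef !mxE => /eqP; rewrite eqr_nat => /eqP.
  apply: val_inj; apply/eqP.
  have : (cubeco i ord0 + 2 * cubeco i (lift ord0 ord0) + 4 * cubeco i (lift ord0 (lift ord0 ord0)) ==
          cubeco j ord0 + 2 * cubeco j (lift ord0 ord0) + 4 * cubeco j (lift ord0 (lift ord0 ord0)))%N.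
    by rewrite !hk.
  by case: i {e hk} => [[|[|[|[|[|[|//]]]]]] hi]; case: j => [[|[|[|[|[|[|//]]]]]] hj].
- move=> u v huv.
  have e : edist (cubef u) (cubef v) ^+ 2 =
    ((cubeco u ord0 != cubeco v ord0) + (cubeco u (lift ord0 ord0) != cubeco v (lift ord0 ord0))
     + (cubeco u (lift ord0 (lift ord0 ord0)) != cubeco v (lift ord0 (lift ord0 ord0))))%N%:R.
    rewrite edist_sq !big_ord_recl big_ord0 addr0 /cubef !mxE !sq01 ?cubeco_le1 //.
    by rewrite !natrD addrA.
  have h1 : ((cubeco u ord0 != cubeco v ord0) + (cubeco u (lift ord0 ord0) != cubeco v (lift ord0 ord0))
     + (cubeco u (lift ord0 (lift ord0 ord0)) != cubeco v (lift ord0 (lift ord0 ord0))) == 1)%N.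
    move: huv.
    by case: u {e} => [[|[|[|[|[|[|//]]]]]] hi]; case: v => [[|[|[|[|[|[|//]]]]]] hj].
  rewrite (eqP h1) in e.
  by rewrite -[edist _ _]ger0_norm ?edist_ge0 // -sqrtr_sqr e mulr1n sqrtr1.
- move=> v; congr Num.sqrt.
  rewrite !big_ord_recl big_ord0 addr0 /cubef /cubec !mxE !sqhalf ?cubeco_le1 //; ring.
Qed.

Definition mcos (x : RR) : RR := cos x.
Definition msin (x : RR) : RR := sin x.
Arguments mcos x%_ring_scope.
Arguments msin x%_ring_scope.

Lemma cos2sin2 (x : RR) : mcos x ^+ 2 + msin x ^+ 2 = 1.
Proof. by have := sin2_cos2 x; rewrite /Rsqr RplusE !RmultE -!expr2 addrC. Qed.

Lemma cosB (x y : RR) : mcos (x - y) = mcos x * mcos y + msin x * msin y.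
Proof. exact: cos_minus. Qed.

Lemma cosN (x : RR) : mcos (- x) = mcos x.
Proof. exact: cos_neg. Qed.

Lemma cosP (x : RR) (k : nat) : mcos (x + 2 * k%:R * PI) = mcos x.
Proof. by have := cos_period x k; rewrite /mcos INRE RplusE !RmultE IZRposE INRE. Qed.

Lemma cosPI3 : mcos (PI / 3) = 1 / 2.
Proof. exact: cos_PI3. Qed.

Lemma PIgt0 : 0 < PI.
Proof. apply/RltP; exact: PI_RGT_0. Qed.

Lemma cosdec (x y : RR) : 0 <= x -> x <= PI -> 0 <= y -> y <= PI -> x < y -> mcos y < mcos x.
Proof.
move=> /RleP h1 /RleP h2 /RleP h3 /RleP h4 /RltP h5; apply/RltP.
exact: cos_decreasing_1.
Qed.

Lemma cos0' : mcos 0 = 1.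
Proof. exact: cos_0. Qed.
Lemma cos2PI' : mcos (2 * PI) = 1.
Proof. exact: cos_2PI. Qed.
Lemma sin2PI' : msin (2 * PI) = 0.
Proof. exact: sin_2PI. Qed.

Lemma sqeq (x y : RR) : 0 <= x -> 0 <= y -> x ^+ 2 = y ^+ 2 -> x = y.
Proof.
move=> hx hy /eqP; rewrite eqf_sqr => /orP [/eqP //|/eqP h].
by move: hx hy; rewrite h => hx hy; lra.
Qed.

Lemma edist_sym k (x y : 'rV[RR]_k) : edist x y = edist y x.
Proof. by rewrite /edist; congr Num.sqrt; apply: eq_bigr => i _; rewrite -sqrrN opprB. Qed.

Lemma star_emb (n m : nat) : (3 <= n)%N -> coprime m n -> (n < 6 * m)%N ->
  (2 * m <= n)%N -> sph_admits (cycle_adj n) 2.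
Proof.
move=> h3 hcop h6 h2.
have n0 : (0 < n)%N by apply: leq_trans h3.
have nR : 0 < (n%:R : RR) by rewrite ltr0n.
have nR0 : (n%:R : RR) != 0 by rewrite gt_eqF.
have pi0 := PIgt0.
have m6 : (n%:R : RR) < 6 * m%:R by rewrite -natrM ltr_nat.
have m2 : 2 * (m%:R : RR) <= n%:R by rewrite -natrM ler_nat.
pose al := 2 * PI * m%:R / n%:R.
have alE : al * n%:R = 2 * PI * m%:R by rewrite /al; field.
have al_gt : PI / 3 < al.
  rewrite /al ltr_pdivlMr //; nra.
have al_le : al <= PI.
  rewrite /al ler_pdivrMr //; nra.
have cal : mcos al < 1 / 2.
  rewrite -cosPI3; apply: cosdec => //; try lra.
pose K := 2 - 2 * mcos al.
have K1 : 1 < K by rewrite /K; lra.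
pose rho := Num.sqrt K^-1.
have Kinv0 : 0 <= K^-1 by rewrite invr_ge0; lra.
have rho2 : rho ^+ 2 = K^-1 by rewrite sqr_sqrtr.
have rho0 : 0 < rho by rewrite sqrtr_gt0 invr_gt0; lra.
have rho1 : rho < 1.
  have : K^-1 < 1 by rewrite invf_lt1 //; lra.
  by rewrite -rho2 => h; nra.
have rhoK : rho ^+ 2 * K = 1 by rewrite rho2 mulVf // gt_eqF //; lra.
pose f (j : 'I_n) : 'rV[RR]_2 := \row_(k < 2)
  (if k == ord0 then rho * mcos (j%:R * al) else rho * msin (j%:R * al)).
have fx j : f j ord0 ord0 = rho * mcos (j%:R * al) by rewrite mxE.
have fy j : f j ord0 (lift ord0 ord0) = rho * msin (j%:R * al) by rewrite mxE.
have dist : forall a b : RR, (rho * mcos a - rho * mcos b) ^+ 2 + (rho * msin a - rho * msin b) ^+ 2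
    = rho ^+ 2 * (2 - 2 * mcos (a - b)).
  move=> a b; rewrite cosB.
  transitivity (rho ^+ 2 * ((mcos a ^+ 2 + msin a ^+ 2) + (mcos b ^+ 2 + msin b ^+ 2)
      - 2 * (mcos a * mcos b + msin a * msin b))); first ring.
  by rewrite !cos2sin2; ring.
have fdist : forall u v, edist (f u) (f v) ^+ 2 = rho ^+ 2 * (2 - 2 * mcos (u%:R * al - v%:R * al)).
  by move=> u v; rewrite edist2 !fx !fy dist.
have rne : rho != 0 by rewrite gt_eqF.
have cos1 : forall d, (0 < d)%N -> (d < n)%N -> mcos (d%:R * al) < 1.
  move=> d d0 dn.
  have hen : (d * m %% n < n)%N by rewrite ltn_pmod.
  have he : (0 < d * m %% n)%N.
    rewrite lt0n; apply/negP => /eqP he.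
    have : (n %| d * m)%N by rewrite /dvdn he.
    rewrite Gauss_dvdl; last by rewrite coprime_sym.
    by move/(dvdn_leq d0); rewrite leqNgt dn.
  have dmE := divn_eq (d * m) n.
  move: he hen dmE; set e := (d * m %% n)%N; set q := (d * m %/ n)%N => he hen dmE.
  pose be := 2 * PI * e%:R / n%:R.
  have hR : d%:R * (m%:R : RR) = q%:R * n%:R + e%:R by rewrite -(natrM _ d m) dmE natrD natrM.
  have -> : d%:R * al = be + 2 * q%:R * PI.
    have -> : d%:R * al = 2 * PI * (d%:R * m%:R) / n%:R by rewrite /al; field.
    by rewrite hR /be; field.
  rewrite cosP.
  have eR : 0 < (e%:R : RR) by rewrite ltr0n.
  have eRn : (e%:R : RR) < n%:R by rewrite ltr_nat.
  have be0 : 0 < be.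
    by apply: divr_gt0 => //; apply: mulr_gt0 => //; apply: mulr_gt0 => //; lra.
  have be2 : be < 2 * PI by rewrite /be ltr_pdivrMr //; nra.
  case: (lerP be PI) => hb.
    by rewrite -[X in _ < X]cos0'; apply: cosdec => //; lra.
  have -> : mcos be = mcos (2 * PI - be) by rewrite cosB cos2PI' sin2PI'; ring.
  by rewrite -[X in _ < X]cos0'; apply: cosdec => //; lra.
have adjcos : forall u v : 'I_n, val v = ((val u).+1 %% n)%N ->
    mcos (u%:R * al - v%:R * al) = mcos al.
  move=> u v h; case: (ltnP (val u).+1 n) => hu.
    rewrite modn_small in h => //.
    by rewrite h -natr1 (_ : _ - _ = - al) ?cosN //; ring.
  have hn : (val u).+1 = n by apply/eqP; rewrite eqn_leq hu ltn_ord.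
  have hv : (v : nat) = 0%N by move: h; rewrite hn modnn.
  have hu' : (u%:R : RR) = n%:R - 1 by rewrite -[in RHS]hn -natr1 addrK.
  rewrite hv hu' (_ : _ - _ = - al + 2 * m%:R * PI) ?cosP ?cosN //.
  have -> : 2 * m%:R * PI = al * n%:R by rewrite alE; ring.
  ring.
exists rho; split => //.
apply: (@sph_emb _ _ _ f (const_mx 0)).
- move=> j k e.
  have ec : mcos (j%:R * al) = mcos (k%:R * al).
    by have := congr1 (fun v : 'rV[RR]_2 => v ord0 ord0) e; rewrite /= !fx => /(mulfI rne).
  have es : msin (j%:R * al) = msin (k%:R * al).
    by have := congr1 (fun v : 'rV[RR]_2 => v ord0 (lift ord0 ord0)) e; rewrite /= !fy => /(mulfI rne).
  have key : forall a b : 'I_n, (a < b)%N -> mcos (a%:R * al) = mcos (b%:R * al) ->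
      msin (a%:R * al) = msin (b%:R * al) -> False.
    move=> a b hab hc hs.
    have := cos1 (b - a)%N; rewrite subn_gt0 hab => /(_ isT).
    have -> : (b - a < n)%N by apply: leq_ltn_trans (leq_subr a b) (ltn_ord b).
    move=> /(_ isT); rewrite (natrB _ (ltnW hab)) mulrBl cosB -hc -hs -!expr2 cos2sin2.
    by rewrite ltxx.
  case: (ltngtP j k) => h.
  + by case: (key j k h ec es).
  + by case: (key k j h (esym ec) (esym es)).
  + exact: val_inj.
- move=> u v; case/orP => /eqP h.
    apply: sqeq; [exact: edist_ge0 | exact: ler01 |].
    by rewrite fdist adjcos // -/K rhoK expr1n.
  rewrite edist_sym; apply: sqeq; [exact: edist_ge0 | exact: ler01 |].
  by rewrite fdist adjcos // -/K rhoK expr1n.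
- move=> v; apply: sqeq; [exact: edist_ge0 | exact: ltW rho0 |].
  rewrite edist2 fx fy !mxE !subr0.
  transitivity (rho ^+ 2 * (mcos (v%:R * al) ^+ 2 + msin (v%:R * al) ^+ 2)); first ring.
  by rewrite cos2sin2 mulr1.
Qed.

Local Open Scope nat_scope.
Lemma oddSd (t : nat) : odd (2 * t).+1.
Proof. by rewrite /= mul2n odd_double. Qed.

Lemma exists_m (n : nat) : (3 <= n)%N -> n <> 6%N ->
  exists m : nat, [/\ coprime m n, (n < 6 * m)%N & (2 * m <= n)%N].
Proof.
move=> h3 h6.
have hn := divn_eq n 4; have := ltn_pmod n (isT : 0 < 4).
move: hn; set t := n %/ 4; set e := n %% 4.
case: e => [|[|[|[|//]]]] hn _; rewrite hn in h3 h6 *.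
- exists (2 * t - 1); split; try lia.
  have -> : t * 4 + 0 = 2 * (2 * t - 1) + 2 by lia.
  rewrite /coprime gcdnMDl; change (coprime (2 * t - 1) 2); rewrite coprimen2.
  have -> : 2 * t - 1 = (2 * (t - 1)).+1 by lia.
  exact: oddSd.
- exists (2 * t); split; try lia.
  have -> : t * 4 + 1 = 2 * (2 * t) + 1 by lia.
  by rewrite /coprime gcdnMDl gcdn1.
- exists (2 * t - 1); split; try lia.
  have -> : t * 4 + 2 = 2 * (2 * t - 1) + 2 ^ 2 by lia.
  rewrite /coprime gcdnMDl; change (coprime (2 * t - 1) (2 ^ 2)).
  rewrite coprime_pexpr // coprimen2.
  have -> : 2 * t - 1 = (2 * (t - 1)).+1 by lia.
  exact: oddSd.
- exists (2 * t + 1); split; try lia.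
  have -> : t * 4 + 3 = 2 * (2 * t + 1) + 1 by lia.
  by rewrite /coprime gcdnMDl gcdn1.
Qed.
Local Open Scope ring_scope.

Theorem mainTheorem6 :
  (forall n : nat, (3 <= n)%N -> n <> 6%N -> sdim_is (cycle_adj n) 2) /\
  sdim_is (cycle_adj 6) 3.
Proof.
split.
- move=> n h3 h6; split.
    have [m [hc hm1 hm2]] := exists_m h3 h6.
    exact: (@star_emb n m).
  by move=> j hj; apply: no_dim01.
- split; first exact: cube_emb.
  move=> j; case: j => [|[|[|//]]] _.
  + by apply: no_dim01.
  + by apply: no_dim01.
  + exact: no_hex2.
Qed.
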